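(* Let $K\subset[0,1]$ be the triadic Cantor set. Then there exist functions $f,g\in C(K,\mathbb{R})$ such that \[ \overline{\dim}_B \operatorname{graph}(f+g)> \max\{\overline{\dim}_B \operatorname{graph}(f),\overline{\dim}_B \operatorname{graph}(g)\}. \]
   Context: $\operatorname{graph}(h)=\{(x,h(x)):x\in K\}\subset\mathbb{R}^2$ with the Euclidean metric. For a non-empty bounded set $X$ in a metric space, $N_n(X)$ is the maximal cardinality of a subset whose points are pairwise at distance $>2^{-n}$, and $\overline{\dim}_B X=\limsup_n \frac{\log N_n(X)}{n\log 2}$ (upper box dimension). *)

(* Defs.v *)
From Stdlib Require Import Reals Lra List.
Open Scope R_scope.

Definition cantor (x : R) : Prop :=
  exists b : nat -> bool,
    infinite_sum (fun i => (if b i then 2 else 0) / 3 ^ (S i)) x.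

Definition continuous_on_cantor (h : R -> R) : Prop :=
  forall x, cantor x -> forall eps, eps > 0 ->
    exists delta, delta > 0 /\
      forall y, cantor y -> Rabs (y - x) < delta -> Rabs (h y - h x) < eps.

Definition graph (h : R -> R) (p : R * R) : Prop :=
  exists x, cantor x /\ p = (x, h x).

Definition dist2 (p q : R * R) : R :=
  sqrt ((fst p - fst q) ^ 2 + (snd p - snd q) ^ 2).

Definition separated (X : R * R -> Prop) (r : R) (l : list (R * R)) : Prop :=
  NoDup l /\ (forall p, In p l -> X p) /\
  (forall p q, In p l -> In q l -> p <> q -> dist2 p q > r).

Definition is_packing_number (X : R * R -> Prop) (n : nat) (m : nat) : Prop :=
  (exists l, separated X (/ 2 ^ n) l /\ length l = m) /\
  (forall l, separated X (/ 2 ^ n) l -> (length l <= m)%nat).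

Definition is_limsup (u : nat -> R) (L : R) : Prop :=
  forall eps, eps > 0 ->
    (exists N, forall n, (n >= N)%nat -> u n < L + eps) /\
    (forall N, exists n, (n >= N)%nat /\ u n > L - eps).

Definition is_upper_box_dim (X : R * R -> Prop) (d : R) : Prop :=
  exists N : nat -> nat,
    (forall n, is_packing_number X n (N n)) /\
    is_limsup (fun n => ln (INR (N n)) / (INR n * ln 2)) d.

(* Main.v *)
Require Import Defs.
From Stdlib Require Import Reals.
Open Scope R_scope.
From Stdlib Require Import Reals Lra Lia List Classical ClassicalEpsilon FunctionalExtensionality.
Open Scope R_scope.

Lemma inv_pow_le (B : R) (a b : nat) : 1 < B -> (a <= b)%nat -> / B ^ b <= / B ^ a.
Proof.
  intros HB Hab. apply Rinv_le_contravar. apply pow_lt; lra. apply Rle_pow; lra || lia.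
Qed.

Lemma inv_pow_pos (B : R) (a : nat) : 1 < B -> 0 < / B ^ a.
Proof. intros HB. apply Rinv_0_lt_compat, pow_lt; lra. Qed.

Lemma core_bound (B : R) (d : nat -> R) (L U : nat) (n : nat) :
  1 < B ->
  (forall i, (i <= n)%nat -> (i < L \/ U <= i)%nat -> d i = 0) ->
  (forall i, Rabs (d i) <= (B - 1) / B ^ (S i)) ->
  Rabs (sum_f_R0 d n) <= / B ^ L - / B ^ (Nat.max L (Nat.min (S n) U)).
Proof.
  intros HB. induction n as [|n IH]; intros H0 Hd.
  - simpl sum_f_R0.
    destruct (Nat.lt_ge_cases 0 L) as [HL|HL]; [|destruct (Nat.le_gt_cases U 0) as [HU|HU]].
    + rewrite (H0 0%nat) by lia. rewrite Rabs_R0.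
      assert (/ B ^ (Nat.max L (Nat.min 1 U)) <= / B ^ L) by (apply inv_pow_le; [lra|lia]). lra.
    + rewrite (H0 0%nat) by lia. rewrite Rabs_R0.
      assert (/ B ^ (Nat.max L (Nat.min 1 U)) <= / B ^ L) by (apply inv_pow_le; [lra|lia]). lra.
    + replace L with 0%nat by lia. replace (Nat.max 0 (Nat.min 1 U)) with 1%nat by lia.
      eapply Rle_trans. apply Hd. simpl. right. field. lra.
  - simpl sum_f_R0.
    assert (IH' := IH (fun i Hi Hc => H0 i ltac:(lia) Hc) Hd).
    destruct (classic ((S n < L)%nat \/ (U <= S n)%nat)) as [Hc|Hc].
    + rewrite (H0 (S n)) by lia. rewrite Rplus_0_r.
      eapply Rle_trans. apply IH'.
      assert (/ B ^ (Nat.max L (Nat.min (S (S n)) U)) <= / B ^ (Nat.max L (Nat.min (S n) U)))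
        by (apply inv_pow_le; [lra|lia]). lra.
    + replace (Nat.max L (Nat.min (S n) U)) with (S n) in IH' by lia.
      replace (Nat.max L (Nat.min (S (S n)) U)) with (S (S n)) by lia.
      eapply Rle_trans. apply Rabs_triang.
      assert (Hs := Hd (S n)).
      assert (E : (B - 1) / B ^ S (S n) = / B ^ S n - / B ^ S (S n)).
      { assert (B ^ S n <> 0) by (apply pow_nonzero; lra).
        replace (B ^ S (S n)) with (B * B ^ S n) by reflexivity. field. split; lra. }
      lra.
Qed.
Lemma cv_abs_le u l N b : Un_cv u l -> (forall n, (n >= N)%nat -> Rabs (u n) <= b) -> Rabs l <= b.
Proof.
  intros Hc Hb. destruct (Rle_or_lt (Rabs l) b) as [|H]; auto.
  destruct (Hc (Rabs l - b)) as [M HM]; [lra|].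
  specialize (HM (max N M) ltac:(lia)). specialize (Hb (max N M) ltac:(lia)).
  unfold Rdist in HM. rewrite Rabs_minus_sym in HM.
  pose proof (Rabs_triang (u (max N M)) (l - u (max N M))).
  replace (u (max N M) + (l - u (max N M))) with l in H0 by ring. lra.
Qed.

Lemma cv_abs_ge u l N b : Un_cv u l -> (forall n, (n >= N)%nat -> b <= Rabs (u n)) -> b <= Rabs l.
Proof.
  intros Hc Hb. destruct (Rle_or_lt b (Rabs l)) as [|H]; auto.
  destruct (Hc (b - Rabs l)) as [M HM]; [lra|].
  specialize (HM (max N M) ltac:(lia)). specialize (Hb (max N M) ltac:(lia)).
  unfold Rdist in HM.
  pose proof (Rabs_triang (u (max N M) - l) l).
  replace (u (max N M) - l + l) with (u (max N M)) in H0 by ring. lra.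
Qed.

Lemma sum_abs_bound B d L n : 1 < B ->
  (forall i, (i < L)%nat -> d i = 0) ->
  (forall i, Rabs (d i) <= (B - 1) / B ^ (S i)) ->
  Rabs (sum_f_R0 d n) <= / B ^ L.
Proof.
  intros HB H0 Hd. eapply Rle_trans. apply (core_bound B d L (S n) n HB).
  - intros i Hi [Hc|Hc]; [apply H0; lia| lia].
  - exact Hd.
  - pose proof (inv_pow_pos B (Nat.max L (Nat.min (S n) (S n))) HB). lra.
Qed.

Lemma conv_ex (t : nat -> R) :
  exists l, (exists B, 1 < B /\ forall i, 0 <= t i <= (B-1)/B^(S i)) -> infinite_sum t l.
Proof.
  destruct (classic (exists B, 1 < B /\ forall i, 0 <= t i <= (B-1)/B^(S i))) as [[B [HB Ht]]|Hn].
  - assert (Hg : Un_growing (sum_f_R0 t)).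
    { intros n. simpl. pose proof (Ht (S n)). lra. }
    assert (Hu : has_ub (sum_f_R0 t)).
    { exists 1. intros x [i ->].
      assert (Rabs (sum_f_R0 t i) <= / B ^ 0).
      { apply sum_abs_bound with (L := 0%nat); auto. intros; lia.
        intros j. rewrite Rabs_pos_eq; apply Ht. }
      simpl in H. rewrite Rinv_1 in H. pose proof (Rle_abs (sum_f_R0 t i)). lra. }
    destruct (growing_cv _ Hg Hu) as [l Hl]. exists l. intros _. exact Hl.
  - exists 0. intros H. contradiction.
Qed.

Definition Sa (t : nat -> R) : R := proj1_sig (constructive_indefinite_description _ (conv_ex t)).

Lemma Sa_spec t B : 1 < B -> (forall i, 0 <= t i <= (B-1)/B^(S i)) -> infinite_sum t (Sa t).
Proof.
  intros HB Ht. unfold Sa. destruct (constructive_indefinite_description _ (conv_ex t)) as [l Hl].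
  simpl. apply Hl. exists B. auto.
Qed.

Lemma diff_le t1 t2 l1 l2 B L : 1 < B -> infinite_sum t1 l1 -> infinite_sum t2 l2 ->
  (forall i, Rabs (t1 i - t2 i) <= (B-1)/B^(S i)) -> (forall i, (i < L)%nat -> t1 i = t2 i) ->
  Rabs (l1 - l2) <= / B ^ L.
Proof.
  intros HB H1 H2 Hd Heq. pose proof (CV_minus _ _ _ _ H1 H2) as Hc.
  apply (cv_abs_le _ _ 0 _ Hc). intros n _. rewrite <- minus_sum.
  apply sum_abs_bound; auto. intros i Hi. rewrite Heq by auto. ring.
Qed.

Lemma sumS f n : sum_f_R0 f (S n) = sum_f_R0 f n + f (S n).
Proof. reflexivity. Qed.

Lemma split_sum d j n :
  sum_f_R0 d n = sum_f_R0 (fun i => if Nat.eqb i j then 0 else d i) n + (if Nat.leb j n then d j else 0).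
Proof.
  induction n as [|n IH].
  - destruct j; simpl; ring.
  - rewrite !sumS. rewrite IH. destruct (Nat.eqb_spec (S n) j); destruct (Nat.leb_spec j n);
      destruct (Nat.leb_spec j (S n)); subst; try lia; ring.
Qed.

Lemma diff_ge_gen t1 t2 l1 l2 B j R0 : 1 < B -> infinite_sum t1 l1 -> infinite_sum t2 l2 ->
  (forall n, Rabs (sum_f_R0 (fun i => if Nat.eqb i j then 0 else t1 i - t2 i) n) <= R0) ->
  Rabs (t1 j - t2 j) - R0 <= Rabs (l1 - l2).
Proof.
  intros HB H1 H2 HR. pose proof (CV_minus _ _ _ _ H1 H2) as Hc.
  apply (cv_abs_ge _ _ j _ Hc). intros n Hn. rewrite <- minus_sum.
  rewrite (split_sum _ j n). destruct (Nat.leb_spec j n); [|lia].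
  specialize (HR n).
  pose proof (Rabs_triang (sum_f_R0 (fun i : nat => if Nat.eqb i j then 0 else t1 i - t2 i) n +
    (t1 j - t2 j)) (- sum_f_R0 (fun i : nat => if Nat.eqb i j then 0 else t1 i - t2 i) n)).
  rewrite Rabs_Ropp in H0.
  replace (sum_f_R0 (fun i : nat => if Nat.eqb i j then 0 else t1 i - t2 i) n + (t1 j - t2 j) +
    - sum_f_R0 (fun i : nat => if Nat.eqb i j then 0 else t1 i - t2 i) n) with (t1 j - t2 j) in H0 by ring.
  lra.
Qed.

Lemma diff_ge_inf t1 t2 l1 l2 B j : 1 < B -> infinite_sum t1 l1 -> infinite_sum t2 l2 ->
  (forall i, Rabs (t1 i - t2 i) <= (B-1)/B^(S i)) -> (forall i, (i < j)%nat -> t1 i = t2 i) ->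
  Rabs (t1 j - t2 j) - / B ^ (S j) <= Rabs (l1 - l2).
Proof.
  intros HB H1 H2 Hd Heq. apply (diff_ge_gen _ _ _ _ B); auto.
  intros n. apply sum_abs_bound; auto.
  - intros i Hi. destruct (Nat.eqb_spec i j); auto. rewrite Heq by lia. ring.
  - intros i. destruct (Nat.eqb i j); auto. rewrite Rabs_R0. left. apply Rdiv_lt_0_compat. lra. apply pow_lt; lra.
Qed.

Lemma diff_ge_fin t1 t2 l1 l2 B j U : 1 < B -> infinite_sum t1 l1 -> infinite_sum t2 l2 ->
  (forall i, Rabs (t1 i - t2 i) <= (B-1)/B^(S i)) -> (forall i, (i < j)%nat -> t1 i = t2 i) ->
  (S j <= U)%nat -> (forall i, (U <= i)%nat -> t1 i = t2 i) ->
  Rabs (t1 j - t2 j) - (/ B ^ (S j) - / B ^ U) <= Rabs (l1 - l2).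
Proof.
  intros HB H1 H2 Hd Heq HU Heq2. apply (diff_ge_gen _ _ _ _ B); auto.
  intros n. eapply Rle_trans. apply (core_bound B _ (S j) U n HB).
  - intros i Hi [Hc|Hc]; destruct (Nat.eqb_spec i j); auto.
    + rewrite Heq by lia. ring.
    + rewrite Heq2 by lia. ring.
  - intros i. destruct (Nat.eqb i j); auto. rewrite Rabs_R0. left. apply Rdiv_lt_0_compat. lra. apply pow_lt; lra.
  - assert (/ B ^ U <= / B ^ (Nat.max (S j) (Nat.min (S n) U))) by (apply inv_pow_le; [lra|lia]). lra.
Qed.
Definition tx (b : nat -> bool) (i : nat) : R := (if b i then 2 else 0) / 3 ^ (S i).
Definition tc (b : nat -> bool) (i : nat) : R := if b i then / 2 ^ (S i) else 0.
Definition tf (b : nat -> bool) (i : nat) : R := if Nat.even i then tc b i else 0.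
Definition tg (b : nat -> bool) (i : nat) : R := if Nat.even i then 0 else tc b i.

Lemma tx_bnd b i : 0 <= tx b i <= (3-1)/3^(S i).
Proof.
  unfold tx. assert (0 < 3 ^ S i) by (apply pow_lt; lra).
  destruct (b i); split; unfold Rdiv; try (apply Rmult_le_pos; [lra|left; apply Rinv_0_lt_compat; lra]);
    apply Rmult_le_compat_r; try lra; left; apply Rinv_0_lt_compat; lra.
Qed.

Lemma tx_diff b b' i : Rabs (tx b i - tx b' i) <= (3-1)/3^(S i).
Proof.
  unfold tx. assert (0 < / 3 ^ S i) by (apply Rinv_0_lt_compat, pow_lt; lra).
  unfold Rdiv. set (a := / 3 ^ S i) in *. apply Rabs_le. destruct (b i), (b' i); lra.
Qed.

Lemma tx_diff_eq b b' i : b i <> b' i -> Rabs (tx b i - tx b' i) = 2 / 3^(S i).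
Proof.
  intros H. unfold tx. assert (0 < / 3 ^ S i) by (apply Rinv_0_lt_compat, pow_lt; lra).
  unfold Rdiv. set (a := / 3 ^ S i) in *. destruct (b i), (b' i); try congruence.
  - rewrite Rabs_pos_eq; lra.
  - rewrite Rabs_left; lra.
Qed.

Lemma tc_bnd b i : 0 <= tc b i <= (2-1)/2^(S i).
Proof.
  unfold tc. assert (0 < / 2 ^ S i) by (apply Rinv_0_lt_compat, pow_lt; lra).
  replace ((2-1)/2^(S i)) with (/ 2 ^ S i) by (field; apply pow_nonzero; lra).
  destruct (b i); lra.
Qed.

Lemma tc_diff b b' i : Rabs (tc b i - tc b' i) <= (2-1)/2^(S i).
Proof.
  unfold tc. assert (0 < / 2 ^ S i) by (apply Rinv_0_lt_compat, pow_lt; lra).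
  replace ((2-1)/2^(S i)) with (/ 2 ^ S i) by (field; apply pow_nonzero; lra).
  set (a := / 2 ^ S i) in *. apply Rabs_le. destruct (b i), (b' i); lra.
Qed.

Lemma tc_diff_eq b b' i : b i <> b' i -> Rabs (tc b i - tc b' i) = (2-1)/2^(S i).
Proof.
  intros H. unfold tc. assert (0 < / 2 ^ S i) by (apply Rinv_0_lt_compat, pow_lt; lra).
  replace ((2-1)/2^(S i)) with (/ 2 ^ S i) by (field; apply pow_nonzero; lra).
  set (a := / 2 ^ S i) in *. destruct (b i), (b' i); try congruence.
  - rewrite Rabs_pos_eq; lra.
  - rewrite Rabs_left; lra.
Qed.

Definition good (tw : (nat -> bool) -> nat -> R) : Prop :=
  (forall b i, 0 <= tw b i <= (2-1)/2^(S i)) /\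
  (forall b b' i, Rabs (tw b i - tw b' i) <= (2-1)/2^(S i)) /\
  (forall b b' i, b i = b' i -> tw b i = tw b' i).

Lemma good_tc : good tc.
Proof. split; [|split]. apply tc_bnd. apply tc_diff. intros b b' i H; unfold tc; now rewrite H. Qed.

Lemma good_tf : good tf.
Proof.
  split; [|split]; intros; unfold tf; destruct (Nat.even i);
    try apply tc_bnd; try apply tc_diff.
  - assert (0 < (2-1)/2^(S i)) by (apply Rdiv_lt_0_compat; [lra|apply pow_lt; lra]). lra.
  - rewrite Rminus_0_r, Rabs_R0. left. apply Rdiv_lt_0_compat; [lra|apply pow_lt; lra].
  - unfold tc; now rewrite H.
  - reflexivity.
Qed.

Lemma good_tg : good tg.
Proof.
  split; [|split]; intros; unfold tg; destruct (Nat.even i);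
    try apply tc_bnd; try apply tc_diff.
  - assert (0 < (2-1)/2^(S i)) by (apply Rdiv_lt_0_compat; [lra|apply pow_lt; lra]). lra.
  - rewrite Rminus_0_r, Rabs_R0. left. apply Rdiv_lt_0_compat; [lra|apply pow_lt; lra].
  - reflexivity.
  - unfold tc; now rewrite H.
Qed.

Lemma dec_ex x : exists b, cantor x -> infinite_sum (tx b) x.
Proof.
  destruct (classic (cantor x)) as [[b Hb]|Hn].
  - exists b. intros _. exact Hb.
  - exists (fun _ => false). intros H; contradiction.
Qed.

Definition dec (x : R) : nat -> bool := proj1_sig (constructive_indefinite_description _ (dec_ex x)).

Lemma dec_spec x : cantor x -> infinite_sum (tx (dec x)) x.
Proof.
  intros H. unfold dec. destruct (constructive_indefinite_description _ (dec_ex x)) as [b Hb]. simpl. auto.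
Qed.

Lemma first_diff (b b' : nat -> bool) j : b j <> b' j ->
  exists k, (k <= j)%nat /\ b k <> b' k /\ forall i, (i < k)%nat -> b i = b' i.
Proof.
  intros Hj. assert (H : exists i, (i <= j)%nat /\ b i <> b' i) by (exists j; split; auto).
  clear Hj. induction j as [|j IH].
  - destruct H as [i [Hi Hb]]. exists 0%nat. replace i with 0%nat in Hb by lia.
    split; [lia|split; auto]. intros; lia.
  - destruct (classic (exists i, (i <= j)%nat /\ b i <> b' i)) as [He|Hne].
    + destruct (IH He) as [k [Hk1 Hk2]]. exists k. split; [lia|auto].
    + destruct H as [i [Hi Hb]]. exists (S j). split; [lia|split].
      * destruct (Nat.eq_dec i (S j)); [subst; auto|].
        exfalso. apply Hne. exists i. split; [lia|auto].
      * intros i0 Hi0. destruct (Bool.bool_dec (b i0) (b' i0)); auto.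
        exfalso. apply Hne. exists i0. split; [lia|auto].
Qed.

Lemma tx_sep b b' x y j : infinite_sum (tx b) x -> infinite_sum (tx b') y ->
  (forall i, (i < j)%nat -> b i = b' i) -> b j <> b' j -> / 3 ^ (S j) <= Rabs (x - y).
Proof.
  intros Hx Hy Heq Hj. pose proof (diff_ge_inf _ _ _ _ 3 j ltac:(lra) Hx Hy (tx_diff b b')) as H.
  rewrite tx_diff_eq in H by auto.
  assert (2 / 3 ^ S j - / 3 ^ S j = / 3 ^ S j) by (field; apply pow_nonzero; lra).
  enough (2 / 3 ^ S j - / 3 ^ S j <= Rabs (x - y)) by lra.
  apply H. intros i Hi. unfold tx. now rewrite Heq.
Qed.

Lemma tx_inj b b' x : infinite_sum (tx b) x -> infinite_sum (tx b') x -> forall i, b i = b' i.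
Proof.
  intros H1 H2 i. destruct (Bool.bool_dec (b i) (b' i)) as [|Hn]; auto.
  destruct (first_diff b b' i Hn) as [k [_ [Hk Hlt]]].
  pose proof (tx_sep _ _ _ _ _ H1 H2 Hlt Hk). rewrite Rminus_diag, Rabs_R0 in H.
  pose proof (inv_pow_pos 3 (S k) ltac:(lra)). lra.
Qed.

Lemma tx_agree b b' x y k : infinite_sum (tx b) x -> infinite_sum (tx b') y ->
  Rabs (x - y) < / 3 ^ k -> forall i, (i < k)%nat -> b i = b' i.
Proof.
  intros H1 H2 Hd i Hi. destruct (Bool.bool_dec (b i) (b' i)) as [|Hn]; auto.
  destruct (first_diff b b' i Hn) as [j [Hj [Hk Hlt]]].
  pose proof (tx_sep _ _ _ _ _ H1 H2 Hlt Hk).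
  pose proof (inv_pow_le 3 (S j) k ltac:(lra) ltac:(lia)). lra.
Qed.

Definition W (tw : (nat -> bool) -> nat -> R) (x : R) : R := Sa (tw (dec x)).

Lemma W_spec tw b : good tw -> infinite_sum (tw b) (Sa (tw b)).
Proof. intros [H _]. apply (Sa_spec _ 2). lra. apply H. Qed.

Lemma W_cont tw : good tw -> continuous_on_cantor (W tw).
Proof.
  intros Hg x Hx eps Heps.
  destruct (pow_lt_1_zero (/2) ltac:(rewrite Rabs_pos_eq; lra) eps Heps) as [k Hk].
  specialize (Hk k (le_n k)). rewrite pow_inv, Rabs_pos_eq in Hk by (left; apply inv_pow_pos; lra).
  exists (/ 3 ^ k). split. apply inv_pow_pos; lra.
  intros y Hy Hyx. unfold W.
  assert (Hag := tx_agree _ _ _ _ k (dec_spec y Hy) (dec_spec x Hx) Hyx).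
  eapply Rle_lt_trans; [|exact Hk].
  destruct Hg as [Hb [Hd He]].
  apply (diff_le (tw (dec y)) (tw (dec x)) _ _ 2 k ltac:(lra)); try apply (Sa_spec _ 2); try lra; auto.
Qed.

Lemma FG_H x : W tf x + W tg x = W tc x.
Proof.
  unfold W. set (b := dec x).
  pose proof (CV_plus _ _ _ _ (W_spec tf b good_tf) (W_spec tg b good_tg)) as H.
  pose proof (W_spec tc b good_tc) as H2.
  apply (UL_sequence _ _ _ H). intros eps He. destruct (H2 eps He) as [N HN]. exists N.
  intros n Hn. rewrite <- sum_plus.
  replace (sum_f_R0 (fun l : nat => tf b l + tg b l) n) with (sum_f_R0 (tc b) n). auto.
  apply sum_eq. intros i _. unfold tf, tg. destruct (Nat.even i); ring.
Qed.
Fixpoint allb (m : nat) : list (list bool) :=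
  match m with
  | O => nil :: nil
  | S m => map (cons false) (allb m) ++ map (cons true) (allb m)
  end.

Lemma allb_length m : length (allb m) = (2 ^ m)%nat.
Proof. induction m; simpl; auto. rewrite length_app, !length_map, IHm. lia. Qed.

Lemma allb_in m s : length s = m -> In s (allb m).
Proof.
  revert s; induction m; intros s Hs.
  - destruct s; simpl in *; auto; lia.
  - destruct s as [|a s]; simpl in Hs; [lia|]. simpl. apply in_or_app.
    destruct a; [right|left]; apply in_map; apply IHm; lia.
Qed.

Lemma allb_in_len m s : In s (allb m) -> length s = m.
Proof.
  revert s; induction m; intros s Hs; simpl in Hs.
  - destruct Hs as [<-|[]]; auto.
  - apply in_app_or in Hs. destruct Hs as [H|H]; apply in_map_iff in H;
      destruct H as [s' [<- H]]; simpl; rewrite (IHm s' H); auto.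
Qed.

Lemma allb_nodup m : NoDup (allb m).
Proof.
  induction m; simpl. constructor; auto. constructor.
  apply NoDup_app.
  - apply NoDup_map_NoDup_ForallPairs; auto. intros a b _ _ H; now injection H.
  - apply NoDup_map_NoDup_ForallPairs; auto. intros a b _ _ H; now injection H.
  - intros a H1 H2. apply in_map_iff in H1, H2. destruct H1 as [? [<- _]]. destruct H2 as [? [H _]]. discriminate.
Qed.

Lemma bits_eq (b b' : nat -> bool) s k : map b (seq s k) = map b' (seq s k) ->
  forall i, (s <= i < s + k)%nat -> b i = b' i.
Proof.
  revert s; induction k; intros s H i Hi; [lia|].
  simpl in H. injection H as H1 H2.
  destruct (Nat.eq_dec i s); [subst; auto|]. apply (IHk (S s)); auto; lia.
Qed.

Lemma sep_bound (X : R*R -> Prop) r (code : R*R -> list bool) K :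
  (forall p q, X p -> X q -> code p = code q -> dist2 p q <= r) ->
  (forall p, X p -> length (code p) = K) ->
  forall l, separated X r l -> (length l <= 2 ^ K)%nat.
Proof.
  intros Hc Hl l [Hnd [HX Hsep]].
  rewrite <- (length_map code l), <- allb_length.
  apply NoDup_incl_length.
  - apply NoDup_map_NoDup_ForallPairs; auto.
    intros p q Hp Hq Heq. destruct (classic (p = q)) as [|Hne]; auto.
    specialize (Hsep p q Hp Hq Hne). specialize (Hc p q (HX p Hp) (HX q Hq) Heq). lra.
  - intros s Hs. apply in_map_iff in Hs. destruct Hs as [p [<- Hp]]. apply allb_in. auto.
Qed.

Lemma dist2_le p q : dist2 p q <= Rabs (fst p - fst q) + Rabs (snd p - snd q).
Proof.
  unfold dist2. rewrite <- (sqrt_pow2 (Rabs (fst p - fst q) + Rabs (snd p - snd q))).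
  apply sqrt_le_1_alt.
  rewrite <- (pow2_abs (fst p - fst q)), <- (pow2_abs (snd p - snd q)).
  pose proof (Rabs_pos (fst p - fst q)). pose proof (Rabs_pos (snd p - snd q)). nra.
  pose proof (Rabs_pos (fst p - fst q)). pose proof (Rabs_pos (snd p - snd q)). lra.
Qed.

Lemma dist2_ge p q : Rabs (snd p - snd q) <= dist2 p q.
Proof.
  unfold dist2. rewrite <- (sqrt_pow2 (Rabs (snd p - snd q))) by apply Rabs_pos.
  apply sqrt_le_1_alt. rewrite pow2_abs. pose proof (pow2_ge_0 (fst p - fst q)). lra.
Qed.

Lemma nat_max (P : nat -> Prop) B : P 0%nat -> (forall m, P m -> (m <= B)%nat) ->
  exists m, P m /\ forall m', P m' -> (m' <= m)%nat.
Proof.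
  intros H0. induction B as [|B IH]; intros HB.
  - exists 0%nat. split; auto.
  - destruct (classic (P (S B))) as [H|H].
    + exists (S B). auto.
    + apply IH. intros m Hm. specialize (HB m Hm). destruct (Nat.eq_dec m (S B)); [subst; contradiction|lia].
Qed.

Lemma packing_exists X n B : (forall l, separated X (/ 2 ^ n) l -> (length l <= B)%nat) ->
  exists m, is_packing_number X n m.
Proof.
  intros HB.
  destruct (nat_max (fun m => exists l, separated X (/ 2 ^ n) l /\ length l = m) B) as [m [[l [Hl1 Hl2]] Hm]].
  - exists nil. split; [|reflexivity]. split; [constructor|split; intros; simpl in *; contradiction].
  - intros m [l [Hl <-]]. auto.
  - exists m. split. exists l; auto. intros l' Hl'. apply Hm. exists l'; auto.
Qed.
Lemma piece_dist tw x y L n : good tw -> cantor x -> cantor y -> (2^(S n) <= 3^L)%nat ->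
  (forall i, (i < L)%nat -> dec x i = dec y i) ->
  (forall i, (i < S n)%nat -> tw (dec x) i = tw (dec y) i) ->
  dist2 (x, W tw x) (y, W tw y) <= / 2 ^ n.
Proof.
  intros Hg Hx Hy HL Hag Hw. eapply Rle_trans. apply dist2_le. simpl fst; simpl snd.
  assert (H1 : Rabs (x - y) <= / 3 ^ L).
  { apply (diff_le (tx (dec x)) (tx (dec y)) _ _ 3 L); try lra; try apply dec_spec; auto.
    apply tx_diff. intros i Hi. unfold tx. now rewrite Hag. }
  assert (H2 : / 3 ^ L <= / 2 ^ S n).
  { apply Rinv_le_contravar. apply pow_lt; lra.
    apply le_INR in HL. rewrite !pow_INR in HL. simpl INR in HL.
    replace (1+1) with 2 in HL by ring. replace (2+1) with 3 in HL by ring. exact HL. }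
  assert (H3 : Rabs (W tw x - W tw y) <= / 2 ^ S n).
  { destruct Hg as [Hb [Hd He]]. unfold W.
    apply (diff_le (tw (dec x)) (tw (dec y)) _ _ 2 (S n)); try lra; try apply (Sa_spec _ 2); auto; lra. }
  assert (/ 2 ^ S n + / 2 ^ S n = / 2 ^ n).
  { simpl. field. apply pow_nonzero; lra. }
  lra.
Qed.

Lemma W_upper tw n L K (idx : nat -> nat) : good tw -> (2^(S n) <= 3^L)%nat ->
  (forall i, (i < L)%nat -> exists j, (j < K)%nat /\ idx j = i) ->
  (forall i, (i < S n)%nat -> (forall b, tw b i = 0) \/ exists j, (j < K)%nat /\ idx j = i) ->
  forall l, separated (graph (W tw)) (/ 2 ^ n) l -> (length l <= 2 ^ K)%nat.
Proof.
  intros Hg HL HiL HiN.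
  apply (sep_bound _ _ (fun p => map (fun j => dec (fst p) (idx j)) (seq 0 K))).
  - intros p q [x [Hx ->]] [y [Hy ->]] Hc. simpl fst in Hc.
    pose proof (bits_eq (fun j => dec x (idx j)) (fun j => dec y (idx j)) 0 K Hc) as Hb.
    apply (piece_dist tw x y L n Hg Hx Hy HL).
    + intros i Hi. destruct (HiL i Hi) as [j [Hj <-]]. apply Hb. lia.
    + intros i Hi. destruct (HiN i Hi) as [Hz|[j [Hj <-]]].
      * rewrite !Hz. auto.
      * destruct Hg as [_ [_ He]]. apply He. apply Hb. lia.
  - intros p _. rewrite length_map, length_seq. auto.
Qed.

Definition KF (n : nat) : nat :=
  (2 * (S n / 3 + 1) + (S n + 1 - 2 * (S n / 3 + 1)) / 2)%nat.

Lemma KF_bound n : (6 * KF n <= 5 * n + 20)%nat.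
Proof.
  unfold KF. pose proof (Nat.div_mod (S n)%nat 3 ltac:(lia)). pose proof (Nat.mod_upper_bound (S n)%nat 3 ltac:(lia)).
  set (q := (S n / 3)%nat) in *. set (L := (2 * (q+1))%nat).
  pose proof (Nat.div_mod (S n + 1 - L)%nat 2 ltac:(lia)). pose proof (Nat.mod_upper_bound (S n + 1 - L)%nat 2 ltac:(lia)).
  set (h := ((S n + 1 - L) / 2)%nat) in *. lia.
Qed.

Lemma pow23 n q : (S n < 3 * q + 3)%nat -> (2 ^ S n <= 3 ^ (2 * (q + 1)))%nat.
Proof.
  intros H. transitivity (2 ^ (3 * (q+1)))%nat.
  apply Nat.pow_le_mono_r; lia.
  rewrite !Nat.pow_mul_r. apply Nat.pow_le_mono_l. simpl. lia.
Qed.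

Definition idxF (L : nat) (r : nat) (j : nat) : nat := if Nat.ltb j L then j else (L + 2 * (j - L) + r)%nat.

Lemma F_upper n l : separated (graph (W tf)) (/ 2 ^ n) l -> (length l <= 2 ^ KF n)%nat.
Proof.
  pose proof (Nat.div_mod (S n)%nat 3 ltac:(lia)). pose proof (Nat.mod_upper_bound (S n)%nat 3 ltac:(lia)).
  unfold KF. set (q := (S n / 3)%nat) in *.
  pose proof (Nat.div_mod (S n + 1 - 2 * (q+1))%nat 2 ltac:(lia)).
  pose proof (Nat.mod_upper_bound (S n + 1 - 2 * (q+1))%nat 2 ltac:(lia)).
  set (h := ((S n + 1 - 2 * (q+1)) / 2)%nat) in *. clearbody q h.
  apply (W_upper tf n (2 * (q+1)) _ (idxF (2 * (q+1)) 0) good_tf).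
  - apply pow23. lia.
  - intros i Hi. exists i. split. lia. unfold idxF. destruct (Nat.ltb_spec i (2*(q+1))); lia.
  - intros i Hi. unfold tf. destruct (Nat.even i) eqn:E; [right|left; auto].
    apply Nat.even_spec in E. destruct E as [a Ha].
    destruct (Nat.lt_ge_cases i (2*(q+1))).
    + exists i. split. lia. unfold idxF. destruct (Nat.ltb_spec i (2*(q+1))); lia.
    + exists (2 * (q+1) + (a - (q+1)))%nat. split. lia. unfold idxF.
      destruct (Nat.ltb_spec (2 * (q + 1) + (a - (q + 1))) (2*(q+1))); lia.
Qed.

Lemma G_upper n l : separated (graph (W tg)) (/ 2 ^ n) l -> (length l <= 2 ^ KF n)%nat.
Proof.
  pose proof (Nat.div_mod (S n)%nat 3 ltac:(lia)). pose proof (Nat.mod_upper_bound (S n)%nat 3 ltac:(lia)).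
  unfold KF. set (q := (S n / 3)%nat) in *.
  pose proof (Nat.div_mod (S n + 1 - 2 * (q+1))%nat 2 ltac:(lia)).
  pose proof (Nat.mod_upper_bound (S n + 1 - 2 * (q+1))%nat 2 ltac:(lia)).
  set (h := ((S n + 1 - 2 * (q+1)) / 2)%nat) in *. clearbody q h.
  apply (W_upper tg n (2 * (q+1)) _ (idxF (2 * (q+1)) 1) good_tg).
  - apply pow23. lia.
  - intros i Hi. exists i. split. lia. unfold idxF. destruct (Nat.ltb_spec i (2*(q+1))); lia.
  - intros i Hi. unfold tg. destruct (Nat.even i) eqn:E; [left; auto|right].
    assert (E' : Nat.odd i = true) by (rewrite <- Nat.negb_even, E; auto).
    apply Nat.odd_spec in E'. destruct E' as [a Ha].
    destruct (Nat.lt_ge_cases i (2*(q+1))).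
    + exists i. split. lia. unfold idxF. destruct (Nat.ltb_spec i (2*(q+1))); lia.
    + exists (2 * (q+1) + (a - (q+1)))%nat. split. lia. unfold idxF.
      destruct (Nat.ltb_spec (2 * (q + 1) + (a - (q + 1))) (2*(q+1))); lia.
Qed.

Lemma H_upper n l : separated (graph (W tc)) (/ 2 ^ n) l -> (length l <= 2 ^ S n)%nat.
Proof.
  apply (W_upper tc n (S n) (S n) (fun j => j) good_tc).
  - apply Nat.pow_le_mono_l. lia.
  - intros i Hi. exists i. auto.
  - intros i Hi. right. exists i. auto.
Qed.
Lemma lub_approx E m eps : is_lub E m -> eps > 0 -> exists y, E y /\ y > m - eps.
Proof.
  intros [Hub Hl] He. apply NNPP. intros Hn.
  assert (H : is_upper_bound E (m - eps)).
  { intros y Hy. destruct (Rle_or_lt y (m - eps)); auto. exfalso; apply Hn; exists y; split; auto; lra. }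
  specialize (Hl _ H). lra.
Qed.

Lemma limsup_exists u C : (forall n, (n >= 1)%nat -> 0 <= u n <= C) -> exists L, is_limsup u L.
Proof.
  intros Hu.
  set (E := fun (N : nat) (y : R) => exists n, (n >= Nat.max N 1)%nat /\ y = u n).
  assert (E_bd : forall N, bound (E N)).
  { intros N. exists C. intros y [n [Hn ->]]. apply Hu. lia. }
  assert (E_ne : forall N, exists y, E N y).
  { intros N. exists (u (Nat.max N 1)). exists (Nat.max N 1). split; auto. }
  set (s := fun N => proj1_sig (completeness (E N) (E_bd N) (E_ne N))).
  assert (s_lub : forall N, is_lub (E N) (s N)).
  { intros N. unfold s. destruct (completeness (E N) (E_bd N) (E_ne N)). auto. }
  set (F := fun y => exists N, y = - s N).
  assert (F_bd : bound F).
  { exists 0. intros y [N ->]. destruct (s_lub N) as [H _].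
    assert (E N (u (Nat.max N 1))) by (exists (Nat.max N 1); split; auto).
    specialize (H _ H0). assert (0 <= u (Nat.max N 1)) by (apply Hu; lia). lra. }
  assert (F_ne : exists y, F y) by (exists (- s 0%nat); exists 0%nat; auto).
  destruct (completeness F F_bd F_ne) as [M HM].
  exists (- M). intros eps He. split.
  - destruct (lub_approx F M eps HM He) as [y [[N ->] Hy]].
    exists (Nat.max N 1). intros n Hn. destruct (s_lub N) as [Hs _].
    assert (E N (u n)) by (exists n; split; auto). specialize (Hs _ H). lra.
  - intros N. destruct (lub_approx (E N) (s N) eps (s_lub N) He) as [y [[n [Hn ->]] Hy]].
    exists n. split. lia. destruct HM as [HM _]. assert (F (- s N)) by (exists N; auto).
    specialize (HM _ H). lra.
Qed.

Lemma INR_small eps : 0 < eps -> exists N, forall n, (n >= N)%nat -> (n >= 1)%nat -> / INR n < eps.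
Proof.
  intros He. destruct (archimed_cor1 eps He) as [N [HN HN0]]. exists N. intros n Hn Hn1.
  eapply Rle_lt_trans; [|exact HN]. apply Rinv_le_contravar. apply lt_0_INR; lia. apply le_INR; lia.
Qed.

Lemma limsup_le u L c K : is_limsup u L -> 0 <= K ->
  (forall n, (n >= 1)%nat -> u n <= c + K / INR n) -> L <= c.
Proof.
  intros HL HK Hb. destruct (Rle_or_lt L c) as [|Hlt]; auto. exfalso.
  set (eps := (L - c) / 2).
  destruct (INR_small (eps / (K + 1))) as [N HN]. unfold eps. apply Rdiv_lt_0_compat; lra.
  destruct (HL eps) as [_ H2]. unfold eps; lra.
  destruct (H2 (Nat.max N 1)) as [n [Hn Hun]].
  specialize (Hb n ltac:(lia)). specialize (HN n ltac:(lia) ltac:(lia)).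
  assert (Hn0 : 0 < / INR n) by (apply Rinv_0_lt_compat, lt_0_INR; lia).
  assert (K / INR n <= eps / (K + 1) * K).
  { unfold Rdiv. rewrite (Rmult_comm K). apply Rmult_le_compat_r; lra. }
  assert (eps / (K+1) * K <= eps).
  { unfold Rdiv. assert (0 < eps) by (unfold eps; lra).
    replace (eps * / (K+1) * K) with (eps * (K / (K+1))) by (field; lra).
    assert (K / (K+1) <= 1). { apply Rmult_le_reg_r with (K+1). lra. unfold Rdiv. rewrite Rmult_assoc, Rinv_l by lra. lra. }
    nra. }
  unfold eps in *. lra.
Qed.

Lemma limsup_ge u L c : is_limsup u L ->
  (forall n, (n >= 1)%nat -> c - 1 / INR n <= u n) -> c <= L.
Proof.
  intros HL Hb. destruct (Rle_or_lt c L) as [|Hlt]; auto. exfalso.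
  set (eps := (c - L) / 2).
  destruct (INR_small eps) as [N HN]. unfold eps; lra.
  destruct (HL eps) as [[N' H1] _]. unfold eps; lra.
  set (n := Nat.max (Nat.max N N') 1).
  specialize (Hb n ltac:(lia)). specialize (HN n ltac:(lia) ltac:(lia)). specialize (H1 n ltac:(lia)).
  unfold Rdiv in Hb. rewrite Rmult_1_l in Hb. unfold eps in *. lra.
Qed.

Lemma ln_le x y : 0 < x -> x <= y -> ln x <= ln y.
Proof. intros Hx [H|H]. left; apply ln_increasing; auto. subst; lra. Qed.

Lemma ln2_pos : 0 < ln 2.
Proof. pose proof ln_lt_2. lra. Qed.

Lemma INR2 : INR 2 = 2.
Proof. simpl. ring. Qed.

Lemma u_upper N E n : (1 <= N)%nat -> (N <= 2^E)%nat -> (1 <= n)%nat ->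
  0 <= ln (INR N) / (INR n * ln 2) <= INR E / INR n.
Proof.
  intros H1 H2 Hn. pose proof ln2_pos.
  assert (Hn0 : 0 < INR n) by (apply lt_0_INR; lia).
  assert (HN : 1 <= INR N) by (apply (le_INR 1); auto).
  assert (Hl0 : 0 <= ln (INR N)) by (rewrite <- ln_1; apply ln_le; lra).
  assert (Hl1 : ln (INR N) <= INR E * ln 2).
  { rewrite <- ln_pow by lra. apply ln_le. lra. apply le_INR in H2. rewrite pow_INR, INR2 in H2. auto. }
  split.
  - unfold Rdiv. apply Rmult_le_pos; auto. left. apply Rinv_0_lt_compat. nra.
  - replace (INR E / INR n) with ((INR E * ln 2) / (INR n * ln 2)) by (field; lra).
    unfold Rdiv. apply Rmult_le_compat_r. left. apply Rinv_0_lt_compat. nra. auto.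
Qed.

Lemma u_lower N m n : (2^m <= N)%nat -> (1 <= n)%nat ->
  INR m / INR n <= ln (INR N) / (INR n * ln 2).
Proof.
  intros H2 Hn. pose proof ln2_pos.
  assert (Hn0 : 0 < INR n) by (apply lt_0_INR; lia).
  assert (Hl1 : INR m * ln 2 <= ln (INR N)).
  { rewrite <- ln_pow by lra. apply ln_le. apply pow_lt; lra. apply le_INR in H2. rewrite pow_INR, INR2 in H2. auto. }
  replace (INR m / INR n) with ((INR m * ln 2) / (INR n * ln 2)) by (field; lra).
  unfold Rdiv. apply Rmult_le_compat_r. left. apply Rinv_0_lt_compat. nra. auto.
Qed.
Definition ext (s : list bool) (i : nat) : bool := nth i s false.
Definition xs (s : list bool) : R := Sa (tx (ext s)).

Lemma xs_spec s : infinite_sum (tx (ext s)) (xs s).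
Proof. apply (Sa_spec _ 3). lra. apply tx_bnd. Qed.

Lemma xs_cantor s : cantor (xs s).
Proof. exists (ext s). apply xs_spec. Qed.

Lemma dec_xs s : dec (xs s) = ext s.
Proof.
  apply functional_extensionality. apply (tx_inj _ _ (xs s)).
  apply dec_spec, xs_cantor. apply xs_spec.
Qed.

Lemma sep_pts m s s' : In s (allb m) -> In s' (allb m) -> s <> s' ->
  / 2 ^ m <= Rabs (W tc (xs s) - W tc (xs s')).
Proof.
  intros Hs Hs' Hne. apply allb_in_len in Hs, Hs'.
  assert (Hi : exists i, (i < m)%nat /\ ext s i <> ext s' i).
  { apply NNPP. intros Hn. apply Hne. apply (nth_ext _ _ false false). congruence.
    intros i Hi. destruct (Bool.bool_dec (nth i s false) (nth i s' false)) as [|H]; auto.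
    exfalso. apply Hn. exists i. split. lia. exact H. }
  destruct Hi as [i [Hi Hd]].
  destruct (first_diff _ _ i Hd) as [j [Hj [Hdj Hlt]]].
  unfold W. rewrite !dec_xs.
  pose proof (diff_ge_fin (tc (ext s)) (tc (ext s')) _ _ 2 j m ltac:(lra)
    (W_spec tc _ good_tc) (W_spec tc _ good_tc) (tc_diff _ _)) as H.
  rewrite tc_diff_eq in H by auto.
  assert (E : (2 - 1) / 2 ^ S j - (/ 2 ^ S j - / 2 ^ m) = / 2 ^ m) by (field; split; apply pow_nonzero; lra).
  rewrite <- E. apply H.
  - intros k Hk. unfold tc. now rewrite Hlt.
  - lia.
  - intros k Hk. unfold tc, ext. rewrite !nth_overflow by lia. auto.
Qed.

Definition pt (s : list bool) : R * R := (xs s, W tc (xs s)).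

Lemma H_lower m : exists l, separated (graph (W tc)) (/ 2 ^ S m) l /\ length l = (2 ^ m)%nat.
Proof.
  exists (map pt (allb m)). split; [|rewrite length_map; apply allb_length].
  assert (Hlt : / 2 ^ S m < / 2 ^ m).
  { apply Rinv_lt_contravar. apply Rmult_lt_0_compat; apply pow_lt; lra. simpl.
    pose proof (pow_lt 2 m ltac:(lra)). lra. }
  assert (Hpos : 0 < / 2 ^ m) by (apply inv_pow_pos; lra).
  split; [|split].
  - apply NoDup_map_NoDup_ForallPairs; [|apply allb_nodup].
    intros s s' Hs Hs' Heq. destruct (classic (s = s')) as [|Hne]; auto.
    pose proof (sep_pts m s s' Hs Hs' Hne). unfold pt in Heq. injection Heq as H1 H2.
    rewrite H2, Rminus_diag, Rabs_R0 in H. lra.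
  - intros p Hp. apply in_map_iff in Hp. destruct Hp as [s [<- _]]. exists (xs s). split; auto. apply xs_cantor.
  - intros p q Hp Hq Hpq. apply in_map_iff in Hp, Hq. destruct Hp as [s [<- Hs]]. destruct Hq as [s' [<- Hs']].
    assert (s <> s') by (intros ->; auto).
    pose proof (sep_pts m s s' Hs Hs' H). pose proof (dist2_ge (pt s) (pt s')). simpl in H1. lra.
Qed.

Lemma singleton_sep tw n : separated (graph (W tw)) (/ 2 ^ n) ((xs nil, W tw (xs nil)) :: nil).
Proof.
  split; [|split].
  - constructor. auto. constructor.
  - intros p [<-|[]]. exists (xs nil). split. apply xs_cantor. reflexivity.
  - intros p q [<-|[]] [<-|[]] H. congruence.
Qed.

Lemma pack_fun tw K : (forall n l, separated (graph (W tw)) (/2^n) l -> (length l <= 2^(K n))%nat) ->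
  exists N, (forall n, is_packing_number (graph (W tw)) n (N n)) /\
    (forall n, (1 <= N n)%nat /\ (N n <= 2 ^ K n)%nat).
Proof.
  intros Hup.
  assert (H : forall n, exists m, is_packing_number (graph (W tw)) n m)
    by (intros n; apply (packing_exists _ _ _ (Hup n))).
  exists (fun n => proj1_sig (constructive_indefinite_description _ (H n))).
  split; intros n; destruct (constructive_indefinite_description _ (H n)) as [m Hm]; simpl; auto.
  destruct Hm as [[l [Hl Hlen]] Hmax]. split.
  - apply (Hmax _ (singleton_sep tw n)).
  - rewrite <- Hlen. apply (Hup n l Hl).
Qed.

Lemma KF_ratio n : (1 <= n)%nat -> INR (KF n) / INR n <= 5/6 + 4 / INR n.
Proof.
  intros Hn. pose proof (KF_bound n) as H. apply le_INR in H.
  rewrite mult_INR, plus_INR, mult_INR in H.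
  replace (INR 6) with 6 in H by (simpl; ring). replace (INR 5) with 5 in H by (simpl; ring).
  replace (INR 20) with 20 in H by (simpl; ring).
  assert (Hn0 : 0 < INR n) by (apply lt_0_INR; lia).
  replace (5/6 + 4 / INR n) with ((5 * INR n + 24) / 6 / INR n) by (field; lra).
  unfold Rdiv. apply Rmult_le_compat_r. left; apply Rinv_0_lt_compat; lra. lra.
Qed.

Lemma FG_dim tw : (forall n l, separated (graph (W tw)) (/2^n) l -> (length l <= 2^(KF n))%nat) ->
  exists d, is_upper_box_dim (graph (W tw)) d /\ d <= 5/6.
Proof.
  intros Hup. destruct (pack_fun tw KF Hup) as [N [HN HNb]].
  set (u := fun n => ln (INR (N n)) / (INR n * ln 2)).
  assert (Hb : forall n, (n >= 1)%nat -> 0 <= u n <= 5/6 + 4 / INR n).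
  { intros n Hn. destruct (HNb n) as [H1 H2]. pose proof (u_upper _ _ n H1 H2 Hn).
    pose proof (KF_ratio n Hn). unfold u. lra. }
  destruct (limsup_exists u 5) as [L HL].
  { intros n Hn. specialize (Hb n Hn). split. lra.
    assert (4 / INR n <= 4).
    { assert (1 <= INR n) by (apply (le_INR 1); lia).
      unfold Rdiv. assert (/ INR n <= 1) by (rewrite <- Rinv_1; apply Rinv_le_contravar; lra). lra. }
    lra. }
  exists L. split. exists N. split; auto.
  apply (limsup_le u L (5/6) 4 HL). lra. intros n Hn. apply Hb; auto.
Qed.

Lemma H_dim : exists d, is_upper_box_dim (graph (W tc)) d /\ 1 <= d.
Proof.
  destruct (pack_fun tc S H_upper) as [N [HN HNb]].
  set (u := fun n => ln (INR (N n)) / (INR n * ln 2)).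
  destruct (limsup_exists u 2) as [L HL].
  { intros n Hn. destruct (HNb n) as [H1 H2]. pose proof (u_upper _ _ n H1 H2 Hn).
    assert (INR (S n) / INR n <= 2).
    { assert (1 <= INR n) by (apply (le_INR 1); lia). rewrite S_INR.
      replace ((INR n + 1) / INR n) with (1 + / INR n) by (field; lra).
      assert (/ INR n <= 1) by (rewrite <- Rinv_1; apply Rinv_le_contravar; lra). lra. }
    unfold u. lra. }
  exists L. split. exists N. split; auto.
  apply (limsup_ge u L 1 HL). intros n Hn.
  destruct n as [|m]; [lia|].
  destruct (H_lower m) as [l [Hl Hlen]].
  assert (Hge : (2 ^ m <= N (S m))%nat) by (rewrite <- Hlen; apply (proj2 (HN (S m))); auto).
  pose proof (u_lower _ _ (S m) Hge Hn). unfold u.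
  assert (INR m / INR (S m) = 1 - 1 / INR (S m)).
  { rewrite S_INR. field. pose proof (pos_INR m). lra. }
  lra.
Qed.

Theorem theorem1p9 :
  exists f g : R -> R,
    continuous_on_cantor f /\ continuous_on_cantor g /\
    exists df dg dfg : R,
      is_upper_box_dim (graph f) df /\
      is_upper_box_dim (graph g) dg /\
      is_upper_box_dim (graph (fun x => f x + g x)) dfg /\
      dfg > Rmax df dg.
Proof.
  exists (W tf), (W tg). split. apply W_cont, good_tf. split. apply W_cont, good_tg.
  destruct (FG_dim tf F_upper) as [df [Hf Hdf]].
  destruct (FG_dim tg G_upper) as [dg [Hg Hdg]].
  destruct H_dim as [dh [Hh Hdh]].
  exists df, dg, dh. split; auto. split; auto.
  replace (fun x => W tf x + W tg x) with (W tc) by (apply functional_extensionality; intros x; symmetry; apply FG_H).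
  split; auto. unfold Rmax. destruct (Rle_dec df dg); lra.
Qed.
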